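(* Let $n\ge 2$, $0<k\le\lfloor n/2\rfloor$, $m_1,\dots,m_n\in\mathbb{R}$, and let $\mathcal{M}(t)$ be the $n\times n$ matrix whose first $k$ rows are $\big(e^{-m_1t}m_1^{r},\dots,e^{-m_nt}m_n^{r}\big)$ for $r=0,1,\dots,k-1$ and whose last $n-k$ rows are $\big(m_1^{s},\dots,m_n^{s}\big)$ for $s=0,1,\dots,n-k-1$. Then the power series of $\det\mathcal{M}(t)$ about $t=0$ has no terms of degree less than $k(n-k)$ and begins $$\det\mathcal{M}(t)=\frac{\varepsilon_{k,n}V}{(k(n-k))!}\,c_0\,t^{k(n-k)}+\dots,$$ where $V=\prod_{1\le i<j\le n}(m_i-m_j)$, $\varepsilon_{k,n}=(-1)^{k(n-k)+\sigma(k)+\sigma(n-k)}$, and $$c_0=(k(n-k))!\prod_{i=1}^{k}\frac{(i-1)!}{(n-k+i-1)!}.$$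
   Context: $\sigma:\mathbb{Z}\to\{0,1\}$ is defined by $\sigma(N)=0$ if $N\equiv 0,1\pmod 4$ and $\sigma(N)=1$ if $N\equiv 2,3\pmod 4$. *)

(* Defs.v *)
From HB Require Import structures.
From mathcomp Require Import all_boot all_order all_algebra.
Set Implicit Arguments. Unset Strict Implicit. Unset Printing Implicit Defensive.
Import Order.TTheory GRing.Theory Num.Theory.
Local Open Scope ring_scope.

Definition sigma (N : nat) : nat := if (N %% 4 < 2)%N then 0%N else 1%N.

(* Power series of exp(a t) in the formal variable t = 'X, truncated below degree D:
   \sum_{j<D} a^j/j! t^j.  All coefficients of degree < D are exact. *)
Definition exp_trunc (R : fieldType) (D : nat) (a : R) : {poly R} :=
  \sum_(j < D) (a ^+ j / (j`!)%:R) *: 'X^j.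

(* The matrix M(t), with each exponential e^{-m_i t} replaced by its power
   series truncated below degree D (entries as polynomials in t = 'X). *)
Definition Mtrunc (R : fieldType) (n k D : nat) (m : 'I_n -> R) : 'M[{poly R}]_n :=
  \matrix_(r < n, i < n)
    if (r < k)%N then exp_trunc D (- m i) * ((m i) ^+ r)%:P
    else ((m i) ^+ (r - k))%:P.

Definition vdm (R : fieldType) (n : nat) (m : 'I_n -> R) : R :=
  \prod_(i < n) \prod_(j < n | (i < j)%N) (m i - m j).

Definition eps (R : fieldType) (k n : nat) : R :=
  (-1) ^+ (k * (n - k) + sigma k + sigma (n - k))%N.

(* c_0 = (k(n-k))! prod_{i=1}^k (i-1)!/(n-k+i-1)!  (reindexed i' = i-1) *)
Definition c0 (R : fieldType) (k n : nat) : R :=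
  ((k * (n - k))`!)%:R * \prod_(i < k) ((i`!)%:R / ((n - k + i)`!)%:R).

(* Main.v *)
Require Import Defs.
From HB Require Import structures.
From mathcomp Require Import all_boot all_order all_algebra all_fingroup.
From mathcomp Require Import zify ring lra.
Set Implicit Arguments. Unset Strict Implicit. Unset Printing Implicit Defensive.
Import Order.TTheory GRing.Theory Num.Theory.
Local Open Scope ring_scope.


Lemma sigmaS k : sigma k.+1 = ((sigma k + k) %% 2)%N.
Proof. rewrite /sigma; case: ifP; case: ifP => /=; lia. Qed.

Lemma sigma_bin2 k : sigma k = ('C(k, 2) %% 2)%N.
Proof.
elim: k => [//|k IH]; rewrite sigmaS IH binS bin1; lia.
Qed.

Lemma bin2_add k l : 'C(k + l, 2) = ('C(k, 2) + 'C(l, 2) + k * l)%N.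
Proof.
elim: l => [|l IH]; first by rewrite addn0 muln0 addn0 [X in (_ + X)%N]bin_small ?addn0.

rewrite addnS binS bin1 IH binS bin1 mulnS; lia.
Qed.

Lemma prod_sub_fact j : (\prod_(i < j) (j - i) = j`!)%N.
Proof.
elim: j => [|j IH]; first by rewrite big_ord0.
rewrite big_ord_recl subn0 factS; congr (_ * _)%N.
by rewrite -IH; apply: eq_bigr => i _; rewrite /bump /= subSS.
Qed.

Lemma sorted_sum_gt (t : seq nat) (l : nat) :
  sorted ltn t -> all (leq l) t ->
  (\sum_(i < size t) (l + i) <= \sum_(x <- t) x)%N /\
  (has (leq (l + size t)) t -> \sum_(i < size t) (l + i) < \sum_(x <- t) x)%N.
Proof.
elim: t l => [|x t IH] l /=; first by rewrite big_nil big_ord0.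
move=> st /andP[lx al].
have st' : sorted ltn t := path_sorted st.
have ax : all (ltn x) t by apply: order_path_min st; move=> ? ? ?; exact: ltn_trans.
have al' : all (leq l.+1) t.
  apply/allP => y yt; have := allP ax y yt; have := lx; rewrite /=; lia.
have [IH1 IH2] := IH l.+1 st' al'.
rewrite big_ord_recl big_cons addn0.
have e : (\sum_(i < size t) (l + bump 0 i) = \sum_(i < size t) (l.+1 + i))%N.
  by apply: eq_bigr => i _; rewrite /bump /=; lia.
rewrite e; split; first by apply: leq_add.
case/orP => [hx|ht]; first by move: hx IH1; lia.
have : has (leq (l.+1 + size t)) t by apply: sub_has ht => y; rewrite /=; lia.
move/IH2; move: lx; lia.
Qed.

Lemma inj_sum_gt k l (g : 'I_k -> nat) :
  injective g -> (forall i, l <= g i)%N -> (exists i, l + k <= g i)%N ->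
  (\sum_(i < k) (l + i) < \sum_(i < k) g i)%N.
Proof.
move=> ig gl [i0 hi0].
set s := [seq g i | i <- enum 'I_k].
have us : uniq s by rewrite map_inj_uniq ?enum_uniq.
set t := sort leq s.
have pst : perm_eq t s by rewrite perm_sort.
have st : sorted ltn t by rewrite ltn_sorted_uniq_leq sort_uniq us sort_sorted //; exact: leq_total.
have szt : size t = k by rewrite size_sort size_map size_enum_ord.
have al : all (leq l) t by rewrite (perm_all _ pst); apply/allP => x /mapP[i _ ->].
have [_ H] := sorted_sum_gt st al.
have -> : (\sum_(i < k) g i = \sum_(x <- t) x)%N.
  by rewrite (perm_big _ pst) big_map big_enum.
rewrite szt in H; apply: H; apply/hasP; exists (g i0).
  by rewrite (perm_mem pst); apply: map_f; rewrite mem_enum.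
by [].
Qed.


Section Rot.
Variable R : fieldType.

Definition rotM N (x : 'I_N.+1 -> R) t : 'M[R]_N.+1 :=
  \matrix_(r < N.+1, i < N.+1) x i ^+ ((r + (N.+1 - t)) %% N.+1).

Lemma rot_step N (x : 'I_N.+1 -> R) t : (t < N.+1)%N ->
  \det (rotM x t.+1) = (-1) ^+ N * \det (rotM x t).
Proof.
move=> ht.
pose s : 'S_N.+1 := lift_perm ord0 ord_max 1.
have -> : rotM x t.+1 = row_perm s (rotM x t).
  apply/matrixP => r i; rewrite !mxE.
  case: (unliftP ord0 r) => [j ->|->].
    rewrite lift_perm_lift perm1 lift0 lift_max; congr (_ ^+ _).
    congr (_ %% _)%N; lia.
  rewrite lift_perm_id /=; congr (_ ^+ _).
  have -> : (N + (N.+1 - t) = (N.+1 - t.+1) + N.+1)%N by lia.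
  by rewrite modnDr add0n.
rewrite row_permE det_mulmx det_perm odd_lift_perm odd_perm1 /= addbF.
by rewrite signr_odd.
Qed.

Lemma rot_det N (x : 'I_N.+1 -> R) t : (t <= N.+1)%N ->
  \det (rotM x t) = (-1) ^+ (t * N) * \det (\matrix_(r < N.+1, i < N.+1) x i ^+ r).
Proof.
elim: t => [_|t IH ht].
  rewrite mul0n expr0 mul1r; congr (\det _); apply/matrixP => r i; rewrite !mxE.
  by rewrite subn0 modnDr modn_small.
rewrite rot_step // IH ?(ltnW ht) // mulrA -exprD; congr (_ ^+ _ * _); lia.
Qed.

Lemma sum_lt_bin2 n : (\sum_(i < n) \sum_(j < n) (i < j) = 'C(n, 2))%N.
Proof.
elim: n => [|n IH]; first by rewrite big_ord0.
rewrite big_ord_recr /= [X in (_ + X)%N]big1 ?addn0; last first.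
  by move=> j _; rewrite ltnNge -ltnS ltn_ord.
rewrite binS bin1 -IH.
under eq_bigr => i _ do rewrite big_ord_recr /=.
rewrite big_split /=; congr (_ + _)%N.
rewrite (eq_bigr (fun _ => 1%N)) ?sum_nat_const ?card_ord ?muln1 //.
by move=> i _; rewrite ltn_ord.
Qed.

Lemma vdm_det n (m : 'I_n -> R) :
  \det (\matrix_(r < n, i < n) m i ^+ r) = (-1) ^+ 'C(n, 2) * vdm m.
Proof.
have -> : \matrix_(r < n, i < n) m i ^+ r = Vandermonde n (\row_i m i).
  by apply/matrixP => r i; rewrite !mxE.
rewrite det_Vandermonde /vdm -sum_lt_bin2 -prodrXr -big_split /=.
apply: eq_bigr => i _.
rewrite big_mkcond [X in _ = _ * X]big_mkcond -prodrXr -big_split /=.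
apply: eq_bigr => j _; rewrite !mxE.
by case: ifP => _; rewrite ?expr1 ?expr0 ?mulN1r ?opprB ?mul1r.
Qed.

End Rot.




Section S.
Variable R : numFieldType.

Definition pr (r : nat) : {poly R} := \prod_(j < r) ('X - (j%:R : R)%:P).

Lemma size_pr r : size (pr r) = r.+1.
Proof.
rewrite /pr size_prod_XsubC; congr _.+1; rewrite -[RHS]card_ord cardT enumT.
by rewrite /index_enum unlock.
Qed.

Lemma monic_pr r : pr r \is monic.
Proof. exact: monic_prod_XsubC. Qed.

Lemma pr_eval r (x : nat) : (r <= x)%N -> (pr r).[x%:R] = (x ^_ r)%:R.
Proof.
move=> hr; rewrite /pr horner_prod ffact_prod natr_prod; apply: eq_bigr => j _.
rewrite hornerXsubC natrB //; apply: ltnW; exact: leq_trans (ltn_ord j) hr.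
Qed.

Lemma detP k l : (k <= l.+1)%N -> \det (\matrix_(r < k, c < k) (((l + c) ^_ r)%:R : R)) =
  \prod_(c < k) (c`!)%:R.
Proof.
move=> hkl.
pose U : 'M[R]_k := \matrix_(r, s) (pr r)`_s.
pose Vx : 'M[R]_k := Vandermonde k (\row_(c < k) ((l + c)%:R : R)).
have -> : \matrix_(r < k, c < k) (((l + c) ^_ r)%:R : R) = U *m Vx.
  apply/matrixP => r c; rewrite !mxE.
  rewrite -pr_eval; last by have := ltn_ord r; lia.
  rewrite (@horner_coef_wide _ k); last by rewrite size_pr.
  by apply: eq_bigr => s _; rewrite !mxE.
rewrite det_mulmx det_trig; last first.
  apply/forallP => r; apply/forallP => s; apply/implyP => hrs; rewrite mxE.
  by rewrite nth_default // size_pr.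
rewrite (eq_bigr (fun _ => 1)) ?big1_eq ?mul1r; last first.
  move=> r _; rewrite mxE; have := monic_pr r; rewrite monicE /lead_coef size_pr.
  by move/eqP.
rewrite det_Vandermonde.
under eq_bigr => i _ do under eq_bigr => j _ do rewrite !mxE.
rewrite (eq_bigr (fun i : 'I_k => \prod_(j < k | (i < j)%N) ((j - i)%N%:R : R))); last first.
  move=> i _; apply: eq_bigr => j hij.
  rewrite natrB ?(ltnW hij) // !natrD; ring.
under eq_bigr => i _ do rewrite big_mkcond.
rewrite exchange_big /=; apply: eq_bigr => j _.
rewrite -big_mkcond /=.
rewrite -(big_ord_widen _ (fun i => ((j - i)%N%:R : R)) (ltnW (ltn_ord j))).
by rewrite -natr_prod prod_sub_fact.
Qed.

Lemma detb k l : (k <= l.+1)%N ->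
  \det (\matrix_(r < k, c < k) (((l + c - r)`!)%:R^-1 : R)) =
  \prod_(i < k) ((i`!)%:R / ((l + i)`!)%:R).
Proof.
move=> hkl.
have -> : \matrix_(r < k, c < k) (((l + c - r)`!)%:R^-1 : R) =
  (\matrix_(r < k, c < k) (((l + c) ^_ r)%:R : R)) *m
     diag_mx (\row_(c < k) (((l + c)`!)%:R^-1 : R)).
  apply/matrixP => r c; rewrite mul_mx_diag !mxE.
  have hr : (r <= l + c)%N by have := ltn_ord r; lia.
  rewrite -(ffact_fact hr) natrM invfM mulrA mulfV ?mul1r //.
  by rewrite pnatr_eq0 -lt0n ffact_gt0.
rewrite det_mulmx detP // det_diag -big_split /=.
by apply: eq_bigr => i _; rewrite mxE.
Qed.
End S.


Section CB.
Variable T : comNzRingType.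

Lemma det_colmx_split k l (X : 'M[T]_(k, k + l)) (Y : 'M[T]_(l, k + l)) :
  \det (col_mx X Y) = \sum_(s : 'S_(k + l)) (-1) ^+ s *
    ((\prod_(i < k) X i (s (lshift l i))) * \prod_(j < l) Y j (s (rshift k j))).
Proof.
rewrite /determinant; apply: eq_bigr => s _; congr (_ * _).
rewrite big_split_ord /=; congr (_ * _); apply: eq_bigr => i _.
  by rewrite col_mxEu.
by rewrite col_mxEd.
Qed.

Lemma det_expand k l N (F : 'M[T]_(k, N)) (W : 'M[T]_(N, k + l))
    (Y : 'M[T]_(l, k + l)) :
  \det (col_mx (F *m W) Y) = \sum_(phi : {ffun 'I_k -> 'I_N})
    (\prod_i F i (phi i)) * \det (col_mx (\matrix_(i, c) W (phi i) c) Y).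
Proof.
rewrite det_colmx_split.
under eq_bigr => s _.
  under eq_bigr => i _ do rewrite mxE.
  rewrite bigA_distr_bigA /= big_distrl big_distrr /=.
  over.
rewrite /= exchange_big /=; apply: eq_bigr => phi _.
rewrite det_colmx_split big_distrr /=; apply: eq_bigr => s _.
have -> : \prod_(i < k) (\matrix_(i0, c) W (phi i0) c) i (s (lshift l i)) =
   \prod_(i < k) W (phi i) (s (lshift l i)) by apply: eq_bigr => i _; rewrite mxE.
rewrite big_split /= [in RHS]mulrCA; congr (_ * _); by rewrite mulrA.
Qed.
End CB.


Lemma sum_shift (T : nmodType) (H : nat -> T) j D N : (j + D <= N)%N ->
  \sum_(e < N) (if (j <= e < j + D)%N then H (e - j)%N else 0) = \sum_(t < D) H t.
Proof.
move=> hN.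
rewrite -(big_mkord xpredT (fun e => if (j <= e < j + D)%N then H (e - j)%N else 0)).
rewrite (big_cat_nat (n := j) (leq0n j) (leq_trans (leq_addr D j) hN)) /=.
rewrite big1_seq ?add0r; last first.
  by move=> e /andP[_]; rewrite mem_index_iota => /andP[_ he]; rewrite leqNgt he.
rewrite (big_cat_nat (n := j + D) (leq_addr D j) hN) /=.
rewrite [X in (_ + X)]big1_seq ?addr0; last first.
  by move=> e /andP[_]; rewrite mem_index_iota => /andP[he _]; rewrite ltnNge he andbF.
rewrite (eq_big_nat _ _ (F2 := fun e => H (e - j)%N)); last first.
  by move=> e ->.
rewrite -{1}[j]add0n big_addn addKn big_mkord; apply: eq_bigr => t _.
by rewrite addnK.
Qed.


Lemma rot_det' (R : fieldType) n (x : 'I_n -> R) t : (0 < n)%N -> (t <= n)%N ->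
  \det (\matrix_(r < n, i < n) x i ^+ ((r + (n - t)) %% n)) =
  (-1) ^+ (t * n.-1) * \det (\matrix_(r < n, i < n) x i ^+ r).
Proof. by case: n x => [//|n] x _ ht; rewrite -rot_det. Qed.

Section Main.
Variables (R : realFieldType) (k l D : nat) (m : 'I_(k + l) -> R).

Definition Nn := (k + D)%N.
Definition W : 'M[R]_(Nn, k + l) := \matrix_(r, i) m i ^+ r.
Definition Bot : 'M[R]_(l, k + l) := \matrix_(j, i) m i ^+ j.
Definition Fm (f : 'I_k -> 'I_Nn -> R) : 'M[{poly R}]_(k, Nn) :=
  \matrix_(r, s) ((f r s)%:P * 'X^(s - r)).
Definition G (phi : {ffun 'I_k -> 'I_Nn}) : R :=
  \det (col_mx (\matrix_(i, c) W (phi i) c) Bot).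
Definition deg (phi : {ffun 'I_k -> 'I_Nn}) : nat := (\sum_i (phi i - i))%N.

Lemma expandE f : \det (col_mx (Fm f *m map_mx polyC W) (map_mx polyC Bot)) =
  \sum_(phi : {ffun 'I_k -> 'I_Nn}) (\prod_i f i (phi i) * G phi)%:P * 'X^(deg phi).
Proof.
rewrite det_expand; apply: eq_bigr => phi _.
have -> : \prod_i Fm f i (phi i) = (\prod_i f i (phi i))%:P * 'X^(deg phi).
  rewrite /deg -prodrXr rmorph_prod -big_split /=; apply: eq_bigr => i _.
  by rewrite mxE.
have -> : \matrix_(i, c) (map_mx polyC W) (phi i) c =
  map_mx polyC (\matrix_(i, c) W (phi i) c).
  by apply/matrixP => i c; rewrite !mxE.
rewrite -map_col_mx det_map_mx /G polyCM; ring.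
Qed.

Lemma coefE f j : (\det (col_mx (Fm f *m map_mx polyC W) (map_mx polyC Bot)))`_j =
  \sum_(phi : {ffun 'I_k -> 'I_Nn}) (\prod_i f i (phi i) * G phi) * (j == deg phi)%:R.
Proof.
rewrite expandE coef_sum; apply: eq_bigr => phi _.
by rewrite coefCM coefXn.
Qed.


Definition f1 (r : 'I_k) (s : 'I_Nn) : R :=
  if (r <= s < r + D)%N then (-1) ^+ (s - r) / ((s - r)`!)%:R else 0.

Lemma Mtrunc_eq : Mtrunc k D m = col_mx (Fm f1 *m map_mx polyC W) (map_mx polyC Bot).
Proof.
apply/matrixP => r i; rewrite /Mtrunc !mxE; case: splitP => j hj; rewrite hj.
  have hle : (j + D <= Nn)%N by rewrite /Nn leq_add2r ltnW.
  have E1 := sum_shift (fun t => ((- m i) ^+ t / (t`!)%:R) *: 'X^t * ((m i ^+ j)%:P)) hle.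
  cbv beta in E1.
  rewrite !mxE /exp_trunc big_distrl /= -E1.
  apply: eq_bigr => s _; rewrite !mxE /f1.
  case: ifP => hs; last by rewrite polyC0 !mul0r.
  have hsj : (s = j + (s - j) :> nat)%N by move: hs; lia.
  set t := (s - j)%N; rewrite hsj -mul_polyC mulrAC -polyCM [in RHS]mulrAC -polyCM.
  congr (_%:P * _); rewrite exprD -/t [(- m i) ^+ _]exprNn.
  set a := m i ^+ t; set b := m i ^+ j; set c := (-1) ^+ t; set d := (t`!)%:R; ring.
by rewrite addKn !mxE.
Qed.


Definition f2 (r : 'I_k) (s : 'I_Nn) : R :=
  if (l <= s < l + k)%N then (-1) ^+ (s - r) / ((s - r)`!)%:R else 0.

Lemma coef_f1_f2 j : (0 < k)%N -> (k <= l)%N -> (k * l < D)%N -> (j <= k * l)%N ->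
  \sum_(phi : {ffun 'I_k -> 'I_Nn}) (\prod_i f1 i (phi i) * G phi) * (j == deg phi)%:R =
  \sum_(phi : {ffun 'I_k -> 'I_Nn}) (\prod_i f2 i (phi i) * G phi) * (j == deg phi)%:R.
Proof.
move=> hk hkl hD hj; apply: eq_bigr => phi _.
have [hA|hA] := boolP [forall i, (l <= phi i < l + k)%N].
  congr (_ * G phi * _); apply: eq_bigr => i _; rewrite /f1 /f2.
  have /andP[h1 h2] := forallP hA i; rewrite h1 h2 /=.
  have -> // : (i <= phi i < i + D)%N.
  have := ltn_ord i; move: h1 h2 hkl hD hk; nia.
move: hA; rewrite negb_forall => /existsP[i0 hi0].
rewrite [in RHS](bigD1 i0) //= /f2 (negbTE hi0) !mul0r -/(f2 _ _).
have [hlt|hge] := boolP [exists i, (phi i < l)%N].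
  move/existsP: hlt => [i hi].
  rewrite /G (@determinant_alternate _ _ _ (lshift l i) (rshift k (Ordinal hi))).
  - by rewrite mulr0 mul0r.
  - apply/eqP => /(congr1 val) /=; have := ltn_ord i; lia.
  - by move=> c; rewrite col_mxEu col_mxEd !mxE.
have [hdup|hinj] := boolP [exists i1, exists i2, (i1 != i2) && (phi i1 == phi i2)].
  move/existsP: hdup => [i1 /existsP[i2 /andP[hne /eqP he]]].
  rewrite /G (@determinant_alternate _ _ _ (lshift l i1) (lshift l i2)).
  - by rewrite mulr0 mul0r.
  - apply/eqP => /(congr1 val) /= /val_inj he'; by rewrite he' eqxx in hne.
  - by move=> c; rewrite !col_mxEu !mxE he.
have ginj : injective (fun i => (phi i : nat)).
  move=> i1 i2 /val_inj he; apply/eqP; apply: contraNT hinj => hne.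
  by apply/existsP; exists i1; apply/existsP; exists i2; rewrite hne he eqxx.
have gl : forall i, (l <= phi i)%N.
  by move=> i; rewrite leqNgt; apply: contraNN hge => h; apply/existsP; exists i.
have hex : exists i, (l + k <= phi i)%N.
  by exists i0; move: hi0; rewrite gl /= -leqNgt.
have hsum := inj_sum_gt ginj gl hex.
have e1 : (\sum_(i < k) (l + i) = k * l + \sum_(i < k) i)%N.
  by rewrite big_split /= sum_nat_const card_ord.
have e2 : (deg phi + \sum_(i < k) i = \sum_(i < k) phi i)%N.
  rewrite /deg -big_split /=; apply: eq_bigr => i _; rewrite subnK //.
  by apply: leq_trans (gl i); apply: leq_trans hkl; apply: ltnW.
have -> : (j == deg phi) = false by apply/negbTE; rewrite neq_ltn; apply/orP; left; lia.
by rewrite mulr0.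
Qed.


Lemma negX_exp (t : nat) : (- 'X : {poly R}) ^+ t = ((-1) ^+ t)%:P * 'X^t.
Proof.
rewrite [LHS]exprNn; congr (_ * _); elim: t => [|t IH]; first by rewrite !expr0.
by rewrite !exprS IH polyCM polyCN polyC1.
Qed.

Definition bmat : 'M[R]_k := \matrix_(r, c) ((l + c - r)`!)%:R^-1.
Definition Amat : 'M[{poly R}]_k :=
  \matrix_(r, c) ((bmat r c)%:P * (- 'X) ^+ (l + c - r)).
Definition Smat : 'M[{poly R}]_(k, Nn) := \matrix_(c, s) ((s == (l + c)%N :> nat)%:R).
Definition W1 : 'M[R]_(k, k + l) := \matrix_(c, i) m i ^+ (l + c).

Lemma Fm_f2 : (k <= l)%N -> (l <= D)%N -> Fm f2 = Amat *m Smat.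
Proof.
move=> hkl hlD; apply/matrixP => r s; rewrite !mxE /f2.
case: ifP => hs.
  have hc : (s - l < k)%N by move: hs; lia.
  rewrite (bigD1 (Ordinal hc)) //= big1 ?addr0 => [|c hc']; last first.
    rewrite !mxE; case: eqP => [he|]; last by rewrite mulr0.
    by case/eqP: hc'; apply: val_inj => /=; rewrite he addKn.
  rewrite !mxE /= subnKC ?eqxx ?mulr1; last by move: hs; lia.
  have hls : (l <= s)%N by move: hs; lia.
  by rewrite negX_exp mulrA -polyCM [X in X%:P * _ = _]mulrC.
rewrite big1 ?polyC0 ?mul0r // => c _; rewrite !mxE.
case: eqP => [he|]; last by rewrite mulr0.
by move: hs; rewrite he; have := ltn_ord c; rewrite leq_addr /= ltn_add2l => ->.
Qed.


Lemma SW : (l <= D)%N -> Smat *m map_mx polyC W = map_mx polyC W1.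
Proof.
move=> hkD; apply/matrixP => c i; rewrite !mxE.
have hc : (l + c < Nn)%N.
  rewrite /Nn; have := ltn_ord c; lia.
rewrite (bigD1 (Ordinal hc)) //= big1 ?addr0.
  by rewrite !mxE eqxx mul1r.
move=> s hs; rewrite !mxE; case: eqP => [he|]; last by rewrite mul0r.
by case/eqP: hs; apply: val_inj.
Qed.

Lemma detA : (k <= l)%N -> \det Amat = (\det bmat)%:P * (- 'X) ^+ (k * l).
Proof.
move=> hkl.
pose d1 : 'rV[{poly R}]_k := \row_r ((- 'X) ^+ r).
pose d2 : 'rV[{poly R}]_k := \row_c ((- 'X) ^+ (l + c)).
have E : diag_mx d1 *m Amat = map_mx polyC bmat *m diag_mx d2.
  apply/matrixP => r c; rewrite mul_diag_mx mul_mx_diag !mxE.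
  rewrite mulrCA -exprD subnKC //; have := ltn_ord r; lia.
have := congr1 determinant E; rewrite !det_mulmx !det_diag det_map_mx.
have -> : \prod_i d2 0 i = (- 'X) ^+ (k * l) * (- 'X) ^+ (\sum_(i < k) i)%N.
  rewrite (eq_bigr (fun i : 'I_k => (- 'X) ^+ (l + i))) ?prodrXr; last by move=> i _; rewrite mxE.
  by rewrite -exprD big_split /= sum_nat_const card_ord mulnC.
have -> : \prod_i d1 0 i = (- 'X) ^+ (\sum_(i < k) i)%N.
  rewrite -prodrXr; apply: eq_bigr => i _; rewrite mxE //.
have hP : (- 'X : {poly R}) ^+ (\sum_(i < k) i)%N != 0.
  by rewrite expf_neq0 // oppr_eq0 polyX_eq0.
move=> h; apply: (mulfI hP); rewrite h; ring.
Qed.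


Lemma G0_eq : (0 < k)%N ->
  \det (col_mx W1 Bot) = (-1) ^+ (k * (k + l).-1) * ((-1) ^+ 'C(k + l, 2) * vdm m).
Proof.
move=> hk.
have -> : col_mx W1 Bot =
    \matrix_(r < k + l, i < k + l) m i ^+ ((r + ((k + l) - k)) %% (k + l)).
  apply/matrixP => r i; rewrite mxE; case: splitP => j hj; rewrite !mxE hj addKn.
    rewrite addnC modn_small //; have := ltn_ord j; lia.
  rewrite (_ : (k + j + l = j + (k + l))%N); last by lia.
  by rewrite modnDr modn_small //; have := ltn_ord j; lia.
rewrite rot_det' ?vdm_det //; last by rewrite leq_addr.
by rewrite addn_gt0 hk.
Qed.

Lemma closed : (0 < k)%N -> (k <= l)%N -> (k * l < D)%N ->
  \det (col_mx (Fm f2 *m map_mx polyC W) (map_mx polyC Bot)) =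
  ((-1) ^+ (k * l) * (\det bmat * \det (col_mx W1 Bot)))%:P * 'X^(k * l).
Proof.
move=> hk hkl hD.
have hlD : (l <= D)%N by apply: leq_trans (ltnW hD); rewrite leq_pmull.
rewrite Fm_f2 // -mulmxA SW //.
have -> : col_mx (Amat *m map_mx polyC W1) (map_mx polyC Bot) =
    block_mx Amat 0 0 1%:M *m col_mx (map_mx polyC W1) (map_mx polyC Bot).
  by rewrite mul_block_col !mul0mx addr0 add0r mul1mx.
rewrite det_mulmx det_ublock det1 mulr1 -map_col_mx det_map_mx detA // negX_exp.
rewrite !polyCM; ring.
Qed.


Lemma coef_main j : (0 < k)%N -> (k <= l)%N -> (k * l < D)%N -> (j <= k * l)%N ->
  (\det (Mtrunc k D m))`_j =
  ((-1) ^+ (k * l) * (\det bmat * \det (col_mx W1 Bot))) * (j == k * l)%:R.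
Proof.
move=> hk hkl hD hj.
by rewrite Mtrunc_eq coefE coef_f1_f2 // -coefE closed // coefCM coefXn.
Qed.

End Main.

Lemma sign_eq k l : (0 < k)%N ->
  odd (k * l + sigma k + sigma l) = odd (k * l + k * (k + l).-1 + 'C(k + l, 2)).
Proof.
move=> hk.
have e1 : ('C(k, 2) * 2 = k * k.-1)%N.
  by rewrite -[2%N]/(2`!) bin_ffact ffactnS ffactn1.
have e2 : (k * (k + l).-1 = k * k.-1 + k * l)%N.
  by rewrite -mulnDr; congr (_ * _)%N; lia.
have := sigma_bin2 k; have := sigma_bin2 l; have := bin2_add k l.
move: e1 e2; set a := 'C(k, 2); set b := 'C(l, 2); set p := (k * l)%N.
set c := 'C(k + l, 2); set q := (k * (k + l).-1)%N; set kk := (k * k.-1)%N.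
move=> e1 e2 e3 e4 e5.
have : ((p + sigma k + sigma l) %% 2 = (p + q + c) %% 2)%N by lia.
rewrite !modn2; by case: odd; case: odd.
Qed.

Theorem mainTheorem7 (R : realFieldType) (n k : nat) (m : 'I_n -> R) (D : nat) :
  (2 <= n)%N -> (0 < k)%N -> (k <= n./2)%N -> (k * (n - k) < D)%N ->
  (forall j : nat, (j < k * (n - k))%N -> (\det (Mtrunc k D m))`_j = 0) /\
  (\det (Mtrunc k D m))`_(k * (n - k)) =
    eps R k n * vdm m / ((k * (n - k))`!)%:R * c0 R k n.
Proof.
move=> hn hk hkn hD.
have hkn' : (k <= n)%N by apply: leq_trans hkn _; rewrite -{2}(odd_double_half n); lia.
have [l hl] : exists l, n = (k + l)%N by exists (n - k)%N; lia.
subst n; rewrite addKn in hD *.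
have hkl : (k <= l)%N.
  move: hkn; rewrite -(leq_double) => h; have := odd_double_half (k + l); lia.
split.
  move=> j hj; rewrite coef_main // ?(ltnW hj) //.
  by rewrite (_ : (j == k * l) = false) ?mulr0 //; apply/negbTE; rewrite neq_ltn hj.
rewrite coef_main // eqxx mulr1 G0_eq // detb ?(leq_trans hkl) //.
rewrite /eps /c0 addKn.
rewrite -[(-1) ^+ (k * l + sigma k + sigma l)]signr_odd sign_eq // signr_odd !exprD.
have hF : ((k * l)`!)%:R != 0 :> R by rewrite pnatr_eq0 -lt0n fact_gt0.
by field.
Qed.
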